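(* Let $B$ be a simple soluble skew left brace. Then $B$ is an abelian brace and $(B,+)=(B,\cdot)$ is a cyclic group of prime order.
   Context: A skew left brace (brace) is a set $B$ with two group structures $(B,+)$ and $(B,\cdot)$ with $a(b+c)=ab-a+ac$; $\lambda_a(b)=-a+ab$. An ideal is a subset that is a normal subgroup of both groups and $\lambda_b$-invariant for all $b$. $B$ is simple if $B\neq0$ and its only ideals are $0$ and $B$. For ideals $I,J$, $[I,J]$ is the smallest ideal containing $[I,J]_+$, $[I,J]_\cdot$ and all $ij-(i+j)$; $B$ is abelian if $[B,B]=0$ (i.e. $ab=a+b=b+a$ for all $a,b$). $B$ is soluble if there is a chain $B=I_0\supseteq\cdots\supseteq I_n=0$ with each $I_i$ an ideal of the brace $I_{i-1}$ and $I_{i-1}/I_i$ abelian. *)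

(* Defs.v *)
From mathcomp Require Import all_boot.
Set Implicit Arguments. Unset Strict Implicit. Unset Printing Implicit Defensive.

Record skew_brace := SkewBrace {
  car :> Type;
  badd : car -> car -> car;
  bzero : car;
  bneg : car -> car;
  bmul : car -> car -> car;
  bone : car;
  binv : car -> car;
  baddA : forall a b c, badd a (badd b c) = badd (badd a b) c;
  badd0 : forall a, badd a bzero = a;
  b0add : forall a, badd bzero a = a;
  baddN : forall a, badd a (bneg a) = bzero;
  bNadd : forall a, badd (bneg a) a = bzero;
  bmulA : forall a b c, bmul a (bmul b c) = bmul (bmul a b) c;
  bmul1 : forall a, bmul a bone = a;
  b1mul : forall a, bmul bone a = a;
  bmulV : forall a, bmul a (binv a) = bone;
  bVmul : forall a, bmul (binv a) a = bone;
  bbrace : forall a b c,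
    bmul a (badd b c) = badd (badd (bmul a b) (bneg a)) (bmul a c)
}.

Section Defs.
Variable B : skew_brace.
Local Notation "a + b" := (badd a b).
Local Notation "- a" := (bneg a).
Local Notation "a * b" := (bmul a b).

Definition lambda (a b : B) : B := - a + a * b.

(** [J] is an ideal of the sub-brace [S] (S a subset of B closed under the
    brace operations; for S = B this is the usual notion of ideal). *)
Definition ideal_of (S J : B -> Prop) : Prop :=
  (forall x, J x -> S x) /\
  J (bzero B) /\ (forall x y, J x -> J y -> J (x + y)) /\ (forall x, J x -> J (- x)) /\
  (forall s x, S s -> J x -> J (s + x + - s)) /\
  J (bone B) /\ (forall x y, J x -> J y -> J (x * y)) /\ (forall x, J x -> J (binv x)) /\
  (forall s x, S s -> J x -> J (s * x * binv s)) /\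
  (forall s x, S s -> J x -> J (lambda s x)).

Definition full : B -> Prop := fun _ => True.
Definition zero_set : B -> Prop := fun x => x = bzero B.

Definition ideal (I : B -> Prop) := ideal_of full I.

Definition simple_brace : Prop :=
  (exists x : B, x <> bzero B) /\
  forall I, ideal I -> (forall x, I x <-> x = bzero B) \/ (forall x, I x).

(** The quotient S/J is an abelian brace: ab = a+b = b+a modulo J, where
    x = y mod J iff -x+y in J (cosets of an ideal are additive cosets). *)
Definition abelian_quotient (S J : B -> Prop) : Prop :=
  forall a b, S a -> S b ->
    J (- (a + b) + a * b) /\ J (- (a + b) + (b + a)).

Definition soluble_brace : Prop :=
  exists (n : nat) (I : nat -> B -> Prop),
    (forall x, I 0 x) /\ (forall x, I n x <-> x = bzero B) /\
    forall i, i < n -> ideal_of (I i) (I i.+1) /\ abelian_quotient (I i) (I i.+1).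

Definition abelian_brace : Prop :=
  forall a b : B, a * b = a + b /\ a + b = b + a.

Definition nmul (k : nat) (g : B) : B := iter k (badd g) (bzero B).

Definition add_cyclic_prime_order : Prop :=
  exists (p : nat) (g : B), prime p /\
    nmul p g = bzero B /\
    (forall k, 0 < k < p -> nmul k g <> bzero B) /\
    (forall x, exists k, x = nmul k g).

End Defs.

(* Main.v *)
Require Import Defs.
From mathcomp Require Import all_boot.
From mathcomp Require Import zify.
From Stdlib Require Import Classical.

Set Implicit Arguments. Unset Strict Implicit. Unset Printing Implicit Defensive.

Section Grp.
Variable B : skew_brace.
Local Notation "a + b" := (badd a b).
Local Notation "- a" := (bneg a).
Local Notation "a * b" := (bmul a b).
Local Notation "0" := (bzero B).

Lemma addKl (a b : B) : - a + (a + b) = b.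
Proof. by rewrite baddA bNadd b0add. Qed.
Lemma addNKl (a b : B) : a + (- a + b) = b.
Proof. by rewrite baddA baddN b0add. Qed.
Lemma cancel_l (a b c : B) : a + b = a + c -> b = c.
Proof. by move=> H; rewrite -(addKl a b) H addKl. Qed.
Lemma neg_unique (a b : B) : a + b = 0 -> b = - a.
Proof. by move=> H; rewrite -(addKl a b) H badd0. Qed.
Lemma eq_from (u v : B) : - u + v = 0 -> v = u.
Proof. by move=> H; rewrite -(addNKl u v) H badd0. Qed.
Lemma neg0 : - 0 = 0 :> B.
Proof. by rewrite -(b0add (- 0)) baddN. Qed.
Lemma negK (a : B) : - - a = a.
Proof. by symmetry; apply: neg_unique; rewrite bNadd. Qed.

Lemma nmulS k (g : B) : nmul k.+1 g = g + nmul k g.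
Proof. by []. Qed.
Lemma nmul0 (g : B) : nmul 0%N g = 0.
Proof. by []. Qed.
Lemma nmul1 (g : B) : nmul 1 g = g.
Proof. by rewrite nmulS nmul0 badd0. Qed.
Lemma nmulD a b (g : B) : nmul (a + b)%N g = nmul a g + nmul b g.
Proof.
elim: a => [|a IH]; first by rewrite add0n nmul0 b0add.
by rewrite addSn !nmulS IH baddA.
Qed.
Lemma nmulM a b (g : B) : nmul (a * b)%N g = nmul a (nmul b g).
Proof.
elim: a => [|a IH]; first by rewrite mul0n.
by rewrite mulSn nmulD IH nmulS.
Qed.
Lemma nmul_zero k : nmul k 0 = 0 :> B.
Proof. by elim: k => [|k IH] //; rewrite nmulS IH badd0. Qed.

Hypothesis comm : forall a b : B, a + b = b + a.

Lemma swap4 (a b c d : B) : (a + b) + (c + d) = (a + c) + (b + d).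
Proof. by rewrite -!baddA; congr (a + _); rewrite !baddA (comm b c). Qed.
Lemma negD (u v : B) : - (u + v) = - u + - v.
Proof.
by symmetry; apply: neg_unique; rewrite swap4 !baddN badd0.
Qed.
Lemma nmul_addr k (u v : B) : nmul k (u + v) = nmul k u + nmul k v.
Proof.
elim: k => [|k IH]; first by rewrite !nmul0 badd0.
by rewrite !nmulS IH swap4.
Qed.
Lemma nmul_neg k (u : B) : nmul k (- u) = - nmul k u.
Proof.
apply: neg_unique; by rewrite -nmul_addr baddN nmul_zero.
Qed.

Definition subgrp (P : B -> Prop) :=
  P 0 /\ (forall x y, P x -> P y -> P (x + y)) /\ (forall x, P x -> P (- x)).

Hypothesis abm : forall a b : B, a * b = a + b.

Lemma one0 : bone B = 0.
Proof.
apply: (@cancel_l (bone B)); by rewrite -abm bmul1 badd0.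
Qed.
Lemma inv_neg (x : B) : binv x = - x.
Proof. apply: neg_unique; by rewrite -abm bmulV one0. Qed.

Lemma subgrp_ideal P : subgrp P -> ideal P.
Proof.
move=> [P0 [PD PN]].
have conj : forall s x, P x -> P (s + x + - s).
  by move=> s x Px; rewrite (comm s x) -baddA baddN badd0.
split; first by [].
split; first by [].
split; first by [].
split; first by [].
split; first by move=> s x _; apply: conj.
split; first by rewrite one0.
split; first by move=> x y Px Py; rewrite abm; apply: PD.
split; first by move=> x Px; rewrite inv_neg; apply: PN.
split; first by move=> s x _ Px; rewrite !abm inv_neg; apply: conj.
by move=> s x _ Px; rewrite /lambda abm addKl.
Qed.

Hypothesis simp : forall P, ideal P -> (forall x, P x <-> x = 0) \/ (forall x, P x).

Lemma subgrp_full P y : subgrp P -> P y -> y <> 0 -> forall z, P z.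
Proof.
move=> sP Py yn0; case: (simp (subgrp_ideal sP)) => [H|H] //.
by exfalso; apply: yn0; apply/H.
Qed.

Definition G (y : B) := fun z => exists k m, z = nmul k y + - nmul m y.

Lemma G_subgrp y : subgrp (G y).
Proof.
split; first by exists 0%N, 0%N; rewrite nmul0 neg0 badd0.
split.
  move=> x1 x2 [k [m ->]] [k' [m' ->]]; exists (k + k')%N, (m + m')%N.
  by rewrite swap4 -negD -!nmulD.
move=> x [k [m ->]]; exists m, k.
by rewrite negD negK comm.
Qed.

Lemma G_self y : G y y.
Proof. by exists 1%N, 0%N; rewrite nmul1 nmul0 neg0 badd0. Qed.

Lemma diff_order (x : B) i j : nmul i x = nmul j x -> i <> j ->
  exists n, 0%N < n /\ nmul n x = 0.
Proof.
move=> E ne.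
case: (ltngtP i j) => [lt|lt|eq]; last by [].
- exists (j - i); split; first by rewrite subn_gt0.
  apply: (@cancel_l (nmul i x)); rewrite -nmulD subnKC; first by rewrite badd0.
  exact: ltnW.
- exists (i - j); split; first by rewrite subn_gt0.
  apply: (@cancel_l (nmul j x)); rewrite -nmulD subnKC; first by rewrite badd0.
  exact: ltnW.
Qed.

Lemma finite_order (x : B) : x <> 0 -> exists n, 0%N < n /\ nmul n x = 0.
Proof.
move=> xn0.
case: (classic (nmul 2 x = 0)) => [H|H]; first by exists 2.
have := subgrp_full (G_subgrp (nmul 2 x)) (G_self _) H x.
move=> [k [m E]].
apply: (@diff_order x (1 + m * 2)%N (k * 2)%N); last by lia.
rewrite nmulD nmul1 !nmulM {1}E -baddA bNadd badd0 //.
Qed.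

Lemma min_ex (P : nat -> Prop) : (exists n, P n) ->
  exists n, P n /\ forall m, m < n -> ~ P m.
Proof.
move=> [n Pn].
elim: n {-2}n (leqnn n) Pn => [|N IH] n Hn Pn.
  exists n; split=> // m lt; by move: (leq_trans lt Hn).
case: (classic (exists m, m < n /\ P m)) => [[m [lt Pm]]|H].
  apply: (IH m) => //; by rewrite -ltnS (leq_trans lt Hn).
exists n; split=> // m lt Pm; apply: H; by exists m.
Qed.

Lemma cyclic_prime : (exists x : B, x <> 0) -> add_cyclic_prime_order B.
Proof.
move=> [x xn0].
have [N [[N0 NX] Nmin]] := min_ex (finite_order xn0).
have Nmin' : forall k, 0%N < k < N -> nmul k x <> 0.
  by move=> k /andP [k0 kN] E; apply: (Nmin k kN).
exists N, x; split; last split=> //; last split=> //.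
- apply/primeP; split.
    case: N N0 NX {Nmin Nmin'} => [|[|N]] // _; by rewrite nmul1.
  move=> d dN.
  case d1: (d == 1); first by [].
  case dNe: (d == N); first by rewrite orbT.
  exfalso.
  have d0 : 0%N < d by case: d dN {d1 dNe} => //; rewrite dvd0n; move/eqP=> E; rewrite E in N0.
  have dle : d <= N by apply: dvdn_leq.
  have dlt : d < N by rewrite ltn_neqAle dNe dle.
  have d2 : 1 < d by case: d d0 d1 {dN dle dlt dNe} => [|[|]].
  set b := N %/ d.
  have Nb : (N = b * d)%N by rewrite divnK.
  have b0 : 0%N < b by rewrite Nb muln_gt0 in N0; case/andP: N0.
  have blt : b < N by rewrite Nb -{1}(muln1 b) ltn_pmul2l.
  have T : subgrp (fun z => nmul d z = 0).
    split; first by rewrite nmul_zero.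
    split; first by move=> u v Hu Hv; rewrite nmul_addr Hu Hv badd0.
    by move=> u Hu; rewrite nmul_neg Hu neg0.
  have Tb : nmul d (nmul b x) = 0 by rewrite -nmulM mulnC -Nb.
  have bb : (0 < b < N)%N by rewrite b0 blt.
  have H := subgrp_full T Tb (Nmin' b bb) x.
  apply: (Nmin' d) => //; by rewrite d0 dlt.
- move=> z.
  have [k [m ->]] := subgrp_full (G_subgrp x) (G_self x) xn0 z.
  exists (k + (N - 1) * m)%N.
  rewrite nmulD; congr (_ + _); symmetry; apply: neg_unique.
  rewrite -nmulD.
  have -> : (m + (N - 1) * m = m * N)%N by case: N N0 {NX Nmin Nmin'} => // N _; rewrite subn1 /= mulnS mulnC.
  by rewrite nmulM NX nmul_zero.
Qed.

End Grp.

Theorem corollary4p5 (B : skew_brace) :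
  simple_brace B -> soluble_brace B ->
  abelian_brace B /\ add_cyclic_prime_order B.
Proof.
move=> [[x xn0] simp] [n [I [I0 [In Ii]]]].
have step : forall m, m <= n -> (forall y, I m y) \/
   exists k, k < m /\ (forall y, I k y) /\ ~ (forall y, I k.+1 y).
  elim=> [|m IH] H; first by left.
  case: (IH (ltnW H)) => [Fm|[k [km Hk]]]; last by right; exists k; rewrite ltnS ltnW.
  case: (classic (forall y, I m.+1 y)) => [F|nF]; first by left.
  by right; exists m.
case: (step n (leqnn n)) => [Fn|[k [kn [Fk nF]]]].
  by exfalso; apply: xn0; apply/In.
have [id ab] := Ii k kn.
have idk : ideal (I k.+1).
  move: id => [_ [h1 [h2 [h3 [h4 [h5 [h6 [h7 [h8 h9]]]]]]]]].
  split; first by [].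
  do 3 (split; first by []).
  split; first by move=> s y _; apply: h4.
  do 3 (split; first by []).
  split; first by move=> s y _; apply: h8.
  by move=> s y _; apply: h9.
have Z : forall y, I k.+1 y <-> y = bzero B.
  by case: (simp _ idk) => // H; exfalso; apply: nF.
have abl : abelian_brace B.
  move=> a b; have [h1 h2] := ab a b (Fk a) (Fk b).
  split; first by apply: eq_from; apply/Z.
  by symmetry; apply: eq_from; apply/Z.
split=> //.
apply: cyclic_prime; last by exists x.
- by move=> a b; case: (abl a b).
- by move=> a b; case: (abl a b).
- exact: simp.
Qed.
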